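(* Let $A$ be an arborescence. The poset consisting of the (arc sets of) nonempty directed paths of $A$, ordered by inclusion, has order dimension at most $3$.
   Context: An arborescence is a directed tree with a root $r$ such that every node is reachable from $r$ by a directed path. The order dimension of a poset $P$ is the least number of linear orders on its ground set whose intersection is the order of $P$. *)

(* Defs.v *)
From mathcomp Require Import all_boot.
Set Implicit Arguments. Unset Strict Implicit. Unset Printing Implicit Defensive.

Section Arb.
Variable T : finType.

Definition und (e : rel T) : rel T := fun u v => e u v || e v u.

(* a directed tree: an orientation of a (finite, simple) tree, i.e. no loops,
   no pair of opposite arcs, underlying undirected graph connected and acyclic *)
Definition directed_tree (e : rel T) : Prop :=
  (forall v, ~~ e v v) /\
  (forall u v, e u v -> ~~ e v u) /\
  (forall u v, connect (und e) u v) /\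
  (~ exists s : seq T, [/\ 3 <= size s, uniq s & cycle (und e) s]).

Definition arborescence (e : rel T) (r : T) : Prop :=
  directed_tree e /\ forall v, connect e r v.

Definition ne_dipath (e : rel T) (p : seq T) : bool :=
  match p with
  | [::] => false
  | x :: s => [&& 0 < size s, uniq p & path e x s]
  end.

Definition arcs (p : seq T) : {set T * T} := [set a in zip p (behead p)].

Definition path_arcsets (e : rel T) (S : {set T * T}) : Prop :=
  exists p, ne_dipath e p /\ S = arcs p.
End Arb.

Definition linear_order_on (U : Type) (X : U -> Prop) (L : U -> U -> Prop) :=
  [/\ (forall x, X x -> L x x),
      (forall x y, X x -> X y -> L x y -> L y x -> x = y),
      (forall x y z, X x -> X y -> X z -> L x y -> L y z -> L x z) &
      (forall x y, X x -> X y -> L x y \/ L y x)].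

Definition order_dim_le (U : Type) (X : U -> Prop) (le : U -> U -> Prop) (k : nat) :=
  exists L : 'I_k -> U -> U -> Prop,
    (forall i, linear_order_on X (L i)) /\
    (forall x y, X x -> X y -> (le x y <-> forall i, L i x y)).

(* Main.v *)
Require Import Defs.
From mathcomp Require Import all_boot zify.
From Stdlib Require Import ClassicalEpsilon.
Set Implicit Arguments. Unset Strict Implicit. Unset Printing Implicit Defensive.

Section Lex.
Variables (T : eqType) (f : T -> nat).
Hypothesis finj : injective f.

Fixpoint lexf (s t : seq T) : bool :=
  match s, t with
  | [::], _ => true
  | _ :: _, [::] => false
  | x :: s', y :: t' => (f x < f y) || ((f x == f y) && lexf s' t')
  end.

Lemma lex_cat s t : lexf s (s ++ t).
Proof. by elim: s => //= x s ->; rewrite eqxx orbT. Qed.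

Lemma lex_total s t : lexf s t || lexf t s.
Proof.
elim: s t => [|x s IH] [|y t] //=.
case: (ltngtP (f x) (f y)) => //= E; rewrite eq_sym E /=; exact: IH.
Qed.

Lemma lex_anti s t : lexf s t -> lexf t s -> s = t.
Proof.
elim: s t => [|x s IH] [|y t] //=.
case: (ltngtP (f x) (f y)) => //= E /IH H /H ->.
by rewrite (finj E).
Qed.

Lemma lex_trans s t u : lexf s t -> lexf t u -> lexf s u.
Proof.
elim: s t u => [|x s IH] [|y t] [|z u] //=.
case: (ltngtP (f x) (f y)) => //= E1.
  case: (ltngtP (f y) (f z)) => //= E2 _.
    by rewrite (ltn_trans E1 E2).
  by rewrite -E2 E1.
move=> H1; case: (ltngtP (f y) (f z)) => //= E2.
  by rewrite E1 E2.
by move=> H2; rewrite E1 E2 eqxx (IH _ _ H1 H2) orbT.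
Qed.
End Lex.

Lemma lex2 (T : eqType) (f1 f2 : T -> nat) : injective f1 -> injective f2 ->
  (forall x y, f1 x < f1 y -> f2 y < f2 x) ->
  forall s t, lexf f1 s t -> lexf f2 s t -> exists u, t = s ++ u.
Proof.
move=> i1 i2 H; elim=> [|x s IH] t; first by exists t.
case: t => [|y t] //=.
case: (eqVneq x y) => [<-|nxy].
  rewrite !ltnn !eqxx /= => /IH h /h [u ->]; by exists u.
have n1 : f1 x != f1 y by apply: contra_neq nxy => /i1.
have n2 : f2 x != f2 y by apply: contra_neq nxy => /i2.
rewrite (negbTE n1) (negbTE n2) !andFb !orbF => l1 l2.
by move: (H _ _ l1); rewrite ltnNge ltnW.
Qed.

Lemma card_rank (T : finType) (A : rel T) :
  (forall x, A x x) -> (forall x y, A x y -> A y x -> x = y) ->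
  (forall x y z, A x y -> A y z -> A x z) -> (forall x y, A x y || A y x) ->
  forall x y, (#|[set z | A z x]| <= #|[set z | A z y]|) = A x y.
Proof.
move=> rf an tr to x y; apply/idP/idP => [|axy].
  apply: contraLR => nxy.
  have ayx : A y x by case/orP: (to x y) => // h; rewrite h in nxy.
  rewrite -ltnNge; apply: proper_card; rewrite properE; apply/andP; split.
    by apply/subsetP => z; rewrite !inE => h; apply: tr h ayx.
  apply/subsetPn; exists x; by rewrite !inE.
by apply: subset_leq_card; apply/subsetP => z; rewrite !inE => h; apply: tr h axy.
Qed.

Lemma spl2 (T : eqType) (x z : T) s : z \in x :: s ->
  exists s1 s2, s = s1 ++ s2 /\ last x s1 = z.
Proof.
elim: s x => [|y s IH] x.
  by rewrite inE => /eqP ->; exists [::], [::].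
rewrite inE => /orP[/eqP ->|]; first by exists [::], (y :: s).
move=> /IH [s1 [s2 [-> <-]]]; by exists (y :: s1), s2.
Qed.

Lemma splQ (T : eqType) (Q : seq T) s x : x \in Q ->
  exists s1 p2, [/\ s = s1 ++ p2, last x s1 \in Q & all (fun y => y \notin Q) p2].
Proof.
move=> xQ; elim/last_ind: s => [|s y [s1 [p2 [-> cQ aQ]]]].
  by exists [::], [::].
case yQ: (y \in Q).
  by exists (rcons (s1 ++ p2) y), [::]; rewrite cats0 last_rcons.
exists s1, (rcons p2 y); split => //; first by rewrite rcons_cat.
by rewrite all_rcons yQ aQ.
Qed.

Lemma cat_pre (T : Type) (s1 t1 s2 t2 : seq T) : s1 ++ t1 = s2 ++ t2 ->
  size s1 <= size s2 -> s2 = s1 ++ drop (size s1) s2.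
Proof.
move=> E le; have := congr1 (take (size s1)) E.
rewrite take_size_cat // take_cat.
case: ltnP => [lt|ge] H.
  by rewrite -{1}(cat_take_drop (size s1) s2) -H.
have eqs : size s1 = size s2 by apply/eqP; rewrite eqn_leq le ge.
move: H; rewrite eqs subnn take0 cats0 => <-; by rewrite drop_size cats0.
Qed.

Lemma catI (T : Type) (s t1 t2 : seq T) : s ++ t1 = s ++ t2 -> t1 = t2.
Proof. by move=> /(congr1 (drop (size s))); rewrite !drop_size_cat. Qed.

Section Tree.
Variables (T : finType) (e : rel T) (r : T).
Hypothesis loop : forall v, ~~ e v v.
Hypothesis asym : forall u v, e u v -> ~~ e v u.
Hypothesis nocyc : ~ exists s : seq T, [/\ 3 <= size s, uniq s & cycle (und e) s].
Hypothesis reach : forall v, connect e r v.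

Lemma sub_und x p : path e x p -> path (und e) x p.
Proof. by apply: sub_path => a b ab; rewrite /und ab. Qed.

Lemma F1 x p : uniq (x :: p) -> path e x p -> e (last x p) x -> False.
Proof.
case: p => [|y [|z p]] /=.
- by move=> _ _ exx; move: (loop x); rewrite exx.
- move=> _ /andP[exy _] eyx; move: (asym exy); by rewrite eyx.
move=> u pp el; apply: nocyc; exists [:: x, y, z & p]; split => //.
rewrite /cycle rcons_path; apply/andP; split; first exact: sub_und.
by rewrite /und el.
Qed.

Lemma F1' x p : path e x p -> last x p = x -> p = [::].
Proof.
case/lastP: p => // p y; rewrite rcons_path last_rcons => /andP[pp ey] yx.
subst y; move: ey; case: (shortenP pp) => p' pp' u _ ey; exfalso.
exact: (F1 u pp' ey).
Qed.

Lemma ex_rp v : exists p, [&& path e r p, uniq (r :: p) & last r p == v].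
Proof.
case/connectP: (reach v) => p pp ->; case: (shortenP pp) => p' pp' u _.
by exists p'; rewrite pp' u eqxx.
Qed.

Lemma notin x p w : path e x p -> e (last x p) w -> w \in x :: p -> False.
Proof.
move=> pp ew /spl2 [s1 [s2 [E L]]]; subst p.
move: pp ew; rewrite cat_path last_cat L => /andP[_ p2] ew.
have := F1' (x := w) (p := rcons s2 w); rewrite rcons_path p2 ew last_rcons.
by move=> /(_ isT erefl); case: s2 {p2 ew}.
Qed.
Lemma UP a b v : e a v -> e b v -> a = b.
Proof.
move=> ea eb; apply/eqP/negPn/negP => nab.
case: (ex_rp a) => pa /and3P[ppa upa /eqP la].
case: (ex_rp b) => qb /and3P[pqb uqb /eqP lb].
have vP : v \notin r :: pa.
  by apply/negP => vin; apply: (notin ppa _ vin); rewrite la.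
have vQ : v \notin r :: qb.
  by apply/negP => vin; apply: (notin pqb _ vin); rewrite lb.
have rQ : r \in r :: qb by rewrite inE eqxx.
case: (splQ pa rQ) => s1 [p2 [Epa cQ aQ]].
set c := last r s1 in cQ.
case: (spl2 cQ) => q1 [q2 [Eqb lq1]].
move: ppa upa la; rewrite Epa cat_path last_cat -/c => /andP[_ pp2] upa lp2.
move: pqb uqb lb; rewrite Eqb cat_path last_cat lq1 => /andP[_ pq2] uqb lq2.
have cs1 : c \in r :: s1 by apply: mem_last.
have cq1 : c \in r :: q1 by rewrite -lq1; apply: mem_last.
move: upa; rewrite -cat_cons cat_uniq => /and3P[_ hp up2].
move: uqb; rewrite -cat_cons cat_uniq => /and3P[_ hq uq2].
have cp2 : c \notin p2 by apply/negP => cp; move/hasPn: hp => /(_ _ cp); rewrite cs1.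
have cq2 : c \notin q2 by apply/negP => cp; move/hasPn: hq => /(_ _ cp); rewrite cq1.
have vp2 : v \notin p2 by apply: contra vP => vp; rewrite Epa -cat_cons mem_cat vp orbT.
have vq2 : v \notin q2 by apply: contra vQ => vp; rewrite Eqb -cat_cons mem_cat vp orbT.
have vc : v != c by apply: contraNneq vP => ->; rewrite Epa -cat_cons mem_cat cs1.
have dpq : ~~ has (mem q2) p2.
  apply/hasPn => y yp; move/allP: aQ => /(_ _ yp); apply: contra => yq.
  by rewrite Eqb -cat_cons mem_cat; apply/orP; right.
apply: nocyc; exists (c :: p2 ++ v :: rev q2); split.
- have : 0 < size p2 + size q2.
    rewrite lt0n addn_eq0 !size_eq0; apply/negP => /andP[/eqP E1 /eqP E2].
    by move: lp2 lq2; rewrite E1 E2 /= => ca cb; case/negP: nab; rewrite -ca -cb.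
  by rewrite /= size_cat /= size_rev addnS !ltnS.
- rewrite cons_uniq mem_cat negb_or cp2 inE negb_or eq_sym vc mem_rev cq2 /=.
  rewrite cat_uniq up2 /= mem_rev vq2 rev_uniq uq2 andbT /= negb_or.
  rewrite vp2 andbT /=.
  apply/hasPn => y; rewrite mem_rev => yq; apply/negP => yp.
  by move/hasPn: dpq => /(_ _ yp) /negP; apply.
rewrite /cycle rcons_cat rcons_cons -rev_cons cat_path (sub_und pp2) /= lp2.
rewrite /und ea /=.
rewrite lastI rev_rcons /= lq2 eb orbT /=.
have := rev_path (und e) c q2; rewrite lq2 => ->.
apply: sub_path (sub_und pq2) => x y; by rewrite /und orbC.
Qed.

Lemma RU p q : path e r p -> path e r q -> uniq (r :: p) -> uniq (r :: q) ->
  last r p = last r q -> p = q.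
Proof.
elim/last_ind: p q => [|p x IH] q.
  case/lastP: q => // q y _ _ _; rewrite last_rcons /= => uq yr.
  by move: uq; rewrite /= mem_rcons inE yr eqxx.
case/lastP: q => [|q y].
  move=> _ _ up _; rewrite last_rcons /= => xr.
  by move: up; rewrite /= mem_rcons inE xr eqxx.
rewrite !rcons_path !last_rcons => /andP[pp ex] /andP[pq ey].
rewrite -!rcons_cons !rcons_uniq => /andP[_ up] /andP[_ uq] xy.
subst y; have := UP ex ey => lpq.
by rewrite (IH q pp pq up uq lpq).
Qed.

Definition rp v := xchoose (ex_rp v).

Lemma rp_spec v : [/\ path e r (rp v), uniq (r :: rp v) & last r (rp v) = v].
Proof. by have /and3P[a b /eqP c] := xchooseP (ex_rp v). Qed.

Lemma RPP x s : path e x s -> uniq (x :: s) -> rp (last x s) = rp x ++ s.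
Proof.
move=> ps us; case: (rp_spec x) => px ux lx.
case: (rp_spec (last x s)) => py uy ly.
apply: RU => //.
- by rewrite cat_path lx ps px.
- rewrite -cat_cons cat_uniq ux; move: us; rewrite cons_uniq => /andP[xs ->].
  rewrite andbT; apply/hasPn => z zs; apply/negP => zR.
  case: (spl2 zR) => t1 [t2 [Et lt]].
  have zx : z \in x :: s by rewrite inE zs orbT.
  case: (spl2 zx) => u1 [u2 [Eu lu]].
  have u1n : u1 != [::] by apply: contraNneq xs => E; move: zs; rewrite -lu E.
  move: px; rewrite Et cat_path lt => /andP[_ pt2].
  have lt2 : last z t2 = x by rewrite -lt -last_cat -Et.
  move: ps; rewrite Eu cat_path => /andP[pu1 _].
  have := F1' (x := z) (p := t2 ++ u1); rewrite cat_path pt2 lt2 pu1 last_cat lt2 lu.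
  move=> /(_ isT erefl) /(congr1 size) /eqP; rewrite size_cat addn_eq0 !size_eq0.
  by rewrite (negbTE u1n) andbF.
- by rewrite ly last_cat lx.
Qed.

Lemma memzip x s a b : path e x s -> ((a, b) \in zip (x :: s) s) = (b \in s) && e a b.
Proof.
elim: s x => [|y s IH] x //= /andP[exy ps].
rewrite in_cons IH // inE; apply/idP/idP.
  case/orP => [/eqP [-> ->]|/andP[-> ->]]; last by rewrite orbT.
  by rewrite eqxx.
case/andP => /orP[/eqP by_|bs] eab.
  by subst b; rewrite (UP eab exy) eqxx.
by rewrite bs eab orbT.
Qed.

Lemma ARC x s a b : path e x s -> ((a, b) \in arcs (x :: s)) = (b \in s) && e a b.
Proof. by move=> ps; rewrite /arcs inE /= memzip. Qed.

Lemma PRED x s b : path e x s -> b \in s -> exists a, e a b.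
Proof.
elim: s x => [|y s IH] x //= /andP[exy ps]; rewrite inE => /orP[/eqP ->|].
  by exists x.
exact: IH ps.
Qed.

Lemma SUBS x1 s1 x2 s2 : path e x1 s1 -> path e x2 s2 ->
  arcs (x1 :: s1) \subset arcs (x2 :: s2) <-> {subset s1 <= s2}.
Proof.
move=> p1 p2; split.
  move=> /subsetP H b bs; case: (PRED p1 bs) => a eab.
  have : (a, b) \in arcs (x1 :: s1) by rewrite ARC // bs eab.
  by move/H; rewrite ARC // => /andP[].
move=> H; apply/subsetP => [[a b]]; rewrite !ARC // => /andP[bs ->].
by rewrite H.
Qed.

Definition rk (x : T) : nat := enum_rank x.
Definition f2 (x : T) : nat := #|T| - rk x.
Lemma rk_lt x : rk x < #|T|. Proof. exact: ltn_ord. Qed.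
Lemma rk_inj : injective rk.
Proof. by move=> x y /ord_inj /enum_rank_inj. Qed.
Lemma f2_inj : injective f2.
Proof. move=> x y; rewrite /f2 => E; apply: rk_inj; have := rk_lt x; have := rk_lt y; lia. Qed.
Lemma f12 x y : rk x < rk y -> f2 y < f2 x.
Proof. rewrite /f2 => h; have := rk_lt x; have := rk_lt y; lia. Qed.

Definition A1 x y := lexf rk (rp x) (rp y).
Definition A2 x y := lexf f2 (rp x) (rp y).

Lemma dim2 x y : A1 x y -> A2 x y -> exists u, rp y = rp x ++ u.
Proof. exact: (lex2 rk_inj f2_inj f12). Qed.

Lemma GEO x1 s1 x2 s2 : ne_dipath e (x1 :: s1) -> ne_dipath e (x2 :: s2) ->
  arcs (x1 :: s1) \subset arcs (x2 :: s2) <->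
  [/\ A1 x2 x1, A1 (last x1 s1) (last x2 s2) & A2 (last x1 s1) (last x2 s2)].
Proof.
move=> /and3P[n1 u1 p1] /and3P[n2 u2 p2].
rewrite SUBS //.
have R1 := RPP p1 u1; have R2 := RPP p2 u2.
have ins2 : forall w, w \in s2 ->
    exists t1 t2, [/\ s2 = t1 ++ t2, rp w = rp x2 ++ t1 & t1 != [::]].
  move=> w ws; have wx : w \in x2 :: s2 by rewrite inE ws orbT.
  case: (spl2 wx) => t1 [t2 [Et lt]]; exists t1, t2; split => //.
    rewrite -lt; apply: RPP.
      by move: p2; rewrite Et cat_path => /andP[].
    by move: u2; rewrite Et -cat_cons cat_uniq => /and3P[].
  move: u2; rewrite cons_uniq => /andP[xs _].
  apply: contraNneq xs => E; move: ws; by rewrite -lt E.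
split.
- move=> H.
  have a21 : A1 x2 x1.
    move: n1 p1 u1 H; case: s1 {R1} => // y s _ p1 u1 H.
    have ys : y \in s2 by apply: H; rewrite inE eqxx.
    case: (ins2 _ ys) => t1' [t2' [_ Ry nt]].
    have Ry' : rp y = rp x1 ++ [:: y].
      apply: (RPP (x := x1) (s := [:: y])).
        by move: p1 => /= /andP[-> _].
      by move: u1; rewrite /= !inE negb_or => /andP[/andP[-> _] _].
    move: nt Ry; case/lastP: t1' => // t y' _.
    rewrite Ry' cats1 -rcons_cat => /rcons_inj [E _].
    by rewrite /A1 E; apply: lex_cat.
  have v1s1 : last x1 s1 \in s1.
    by move: n1; case: s1 {p1 u1 R1 H} => // y s _ /=; apply: mem_last.
  case: (ins2 _ (H _ v1s1)) => t1 [t2 [Es2 Rv _]].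
  have Rv2 : rp (last x2 s2) = rp (last x1 s1) ++ t2 by rewrite R2 Rv Es2 catA.
  by split => //; [rewrite /A1 Rv2; apply: lex_cat|rewrite /A2 Rv2; apply: lex_cat].
- case=> a21 a1 a2; case: (dim2 a1 a2) => t Rt.
  rewrite R1 R2 -catA in Rt.
  have sz : size (rp x2) <= size (rp x1).
    rewrite leqNgt; apply/negP => lt.
    have E := cat_pre (esym Rt) (ltnW lt).
    have a12 : A1 x1 x2 by rewrite /A1 E; apply: lex_cat.
    by have := lex_anti rk_inj a12 a21 => E'; rewrite E' ltnn in lt.
  have E := cat_pre Rt sz.
  rewrite E -catA in Rt; have Es2 := catI Rt.
  by move=> w ws; rewrite Es2 !mem_cat ws orbT.
Qed.

Lemma lex_refl (f : T -> nat) s : lexf f s s.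
Proof. by have := lex_cat f s [::]; rewrite cats0. Qed.

Lemma rp_inj x y : rp x = rp y -> x = y.
Proof. move=> E; case: (rp_spec x) => _ _ lx; case: (rp_spec y) => _ _ ly; by rewrite -lx -ly E. Qed.

Definition al x := #|[set z | A1 z x]|.
Definition be x := #|[set z | A2 z x]|.

Lemma al_le x y : (al x <= al y) = A1 x y.
Proof.
rewrite /al; apply: (card_rank (A := A1)).
- by move=> z; apply: lex_refl.
- by move=> a b h1 h2; apply: rp_inj; exact: (lex_anti rk_inj h1 h2).
- by move=> a b c; apply: lex_trans.
- by move=> a b; apply: lex_total.
Qed.

Lemma be_le x y : (be x <= be y) = A2 x y.
Proof.
rewrite /be; apply: (card_rank (A := A2)).
- by move=> z; apply: lex_refl.
- by move=> a b h1 h2; apply: rp_inj; exact: (lex_anti f2_inj h1 h2).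
- by move=> a b c; apply: lex_trans.
- by move=> a b; apply: lex_total.
Qed.

Lemma al_bd x : al x <= #|T|. Proof. exact: max_card. Qed.

Definition pickp (S : {set T * T}) : seq T :=
  epsilon (inhabits [::]) (fun p => ne_dipath e p /\ S = arcs p).

Lemma pickP S : path_arcsets e S -> ne_dipath e (pickp S) /\ S = arcs (pickp S).
Proof. by move=> h; apply: (epsilon_spec (inhabits [::]) (fun p => ne_dipath e p /\ S = arcs p)). Qed.

Definition uS S := head r (pickp S).
Definition vS S := last (uS S) (behead (pickp S)).

Definition key (i : 'I_3) S :=
  match nat_of_ord i with
  | 0 => #|T| - al (uS S)
  | 1 => al (vS S)
  | _ => be (vS S)
  end.

Definition RR := #|{set T * T}|.
Definition MM := (#|{: T * T}|).+1 * RR.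
Definition g (S : {set T * T}) := #|S| * RR + enum_rank S.
Definition FF i S := key i S * MM + g S.

Lemma rank_lt (S : {set T * T}) : enum_rank S < RR.
Proof. exact: ltn_ord. Qed.

Lemma g_lt S : g S < MM.
Proof.
rewrite /g /MM; have h1 := rank_lt S; have h2 : #|S| <= #|{: T * T}| := max_card _.
nia.
Qed.

Lemma g_mono (S1 S2 : {set T * T}) : S1 \subset S2 -> g S1 <= g S2.
Proof.
move=> sub; case: (eqVneq S1 S2) => [->//|ne].
have lt : #|S1| < #|S2|.
  by apply: proper_card; rewrite properEneq ne sub.
rewrite /g; have h1 := rank_lt S1; nia.
Qed.

Lemma FF_inj i (S1 S2 : {set T * T}) : FF i S1 = FF i S2 -> S1 = S2.
Proof.
move=> /(congr1 (modn^~ MM)); rewrite /FF !modnMDl !modn_small ?g_lt //.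
move=> /(congr1 (modn^~ RR)); rewrite /g !modnMDl !modn_small ?rank_lt //.
by move=> /ord_inj /enum_rank_inj.
Qed.

Lemma FF_key i (S1 S2 : {set T * T}) : FF i S1 <= FF i S2 -> key i S1 <= key i S2.
Proof.
have M0 : 0 < MM by have := g_lt S1; case: MM.
move=> /(leq_div2r MM); rewrite /FF !divnMDl // !divn_small ?g_lt // !addn0; apply.
Qed.

Lemma main : order_dim_le (path_arcsets e)
    (fun S1 S2 : {set T * T} => S1 \subset S2) 3.
Proof.
exists (fun i S1 S2 => FF i S1 <= FF i S2); split.
  move=> i; split.
  - by move=> x _.
  - by move=> x y _ _ h1 h2; apply: (FF_inj (i := i)); apply/eqP; rewrite eqn_leq h1.
  - by move=> x y z _ _ _; apply: leq_trans.
  - by move=> x y _ _; case/orP: (leq_total (FF i x) (FF i y)); [left|right].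
move=> S1 S2 X1 X2.
case: (pickP X1) (pickP X2) => n1 E1 [n2 E2].
have [x1 [s1 Ep1]] : exists x s, pickp S1 = x :: s.
  by move: n1; case: (pickp S1) => // x s _; exists x, s.
have [x2 [s2 Ep2]] : exists x s, pickp S2 = x :: s.
  by move: n2; case: (pickp S2) => // x s _; exists x, s.
have U1 : uS S1 = x1 by rewrite /uS Ep1.
have U2 : uS S2 = x2 by rewrite /uS Ep2.
have V1 : vS S1 = last x1 s1 by rewrite /vS U1 Ep1.
have V2 : vS S2 = last x2 s2 by rewrite /vS U2 Ep2.
rewrite Ep1 in n1 E1; rewrite Ep2 in n2 E2.
have G := GEO n1 n2; rewrite -E1 -E2 in G.
have KE : forall i, key i S1 <= key i S2 <->
    match nat_of_ord i with
    | 0 => al x2 <= al x1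
    | 1 => al (last x1 s1) <= al (last x2 s2)
    | _ => be (last x1 s1) <= be (last x2 s2)
    end.
  move=> i; rewrite /key U1 U2 V1 V2.
  case: (nat_of_ord i) => [|[|?]] //.
  have := al_bd x1; have := al_bd x2; split; lia.
rewrite G; split.
- case=> a21 a1 a2 i; rewrite /FF; apply: leq_add; last by apply: g_mono; rewrite G.
  apply: leq_mul => //; apply/KE.
  by case: (nat_of_ord i) => [|[|?]]; rewrite ?al_le ?be_le.
- move=> H.
  have k0 := FF_key (H (@Ordinal 3 0 isT)).
  have k1 := FF_key (H (@Ordinal 3 1 isT)).
  have k2 := FF_key (H (@Ordinal 3 2 isT)).
  move/KE: k0; move/KE: k1; move/KE: k2 => /=.
  by rewrite !al_le be_le.
Qed.
End Tree.

Theorem proposition1 (T : finType) (e : rel T) (r : T) :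
  arborescence e r ->
  order_dim_le (path_arcsets e)
    (fun S1 S2 : {set T * T} => S1 \subset S2) 3.
Proof.
case=> [[lp [asy [_ nc]]] re].
exact: (main lp asy nc re).
Qed.
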